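(* Fix a device $n$, a control parameter $V\ge0$ and a frame $k$. For any feasible decisions $0\le\gamma_n^k\le1$ and $0\le p_n^t\le\overline{P}_n$ for all $t\in\mathcal{T}_k=\{kT,\dots,(k+1)T-1\}$, $$\mathcal{D}_n(Q_n^{kT})\le\beta_2T+\mathbb{E}\Big\{\sum_{t\in\mathcal{T}_k}VX_n^t+Q_n^{kT}(E_n^t-\overline{E}_n)\,\Big|\,Q_n^{kT}\Big\},$$ where $\beta_2=\beta_1+\frac{(T-1)[(E_{n,\max}-\overline{E}_n)E_{n,\max}+\overline{E}_n^2]}{2}$ and $\beta_1=\frac12(E_{n,\max}^2+\overline{E}_n^2)$.
   Context: Device $n$ in a federated learning system consumes energy $E_n^t\ge0$ in slot $t$ (computation plus communication energy, determined by the freezing percentage $\gamma_n^k$ of the current frame and the transmit power $p_n^t$), and $E_{n,\max}$ is an upper bound with $E_n^t\le E_{n,\max}$ for all $t$. $\overline{E}_n>0$ is its average energy budget and $\overline{P}_n$ its peak power. $X_n^t=\lambda\mathbb{1}_n^tB_n(\gamma_n^k-1)$ is the per-slot convergence-error term, with constant $\lambda>0$, data size $B_n$, and success indicator $\mathbb{1}_n^t\in\{0,1\}$. The virtual energy-deficit queue evolves as $Q_n^{t+1}=\max\{Q_n^t+E_n^t-\overline{E}_n,0\}$ with $Q_n^0=0$. Slots are grouped into frames of $T$ slots. The $T$-slot conditional Lyapunov drift is $\Delta_{n,T}(Q_n^t)=\mathbb{E}\{\frac12(Q_n^{t+T})^2-\frac12(Q_n^t)^2\mid Q_n^t\}$,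 and the drift-plus-penalty of frame $k$ is $\mathcal{D}_n(Q_n^{kT})=\Delta_{n,T}(Q_n^{kT})+V\mathbb{E}\{\sum_{t\in\mathcal{T}_k}X_n^t\mid Q_n^{kT}\}$. Expectations are over channel randomness. *)

(* Defs.v *)
From HB Require Import structures.
From mathcomp Require Import all_boot all_order all_algebra.
From mathcomp Require Import all_classical all_reals all_analysis.
Set Implicit Arguments. Unset Strict Implicit. Unset Printing Implicit Defensive.
Import Order.TTheory GRing.Theory Num.Theory.
Local Open Scope classical_set_scope.
Local Open Scope ring_scope.

Section FLDefs.
Context {d : measure_display} {Omega : measurableType d} {R : realType}.

Fixpoint Qq (Ebar : R) (En : nat -> Omega -> R) (t : nat) (w : Omega) : R :=
  match t with
  | 0%N => 0
  | t'.+1 => Num.max (Qq Ebar En t' w + En t' w - Ebar) 0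
  end.

(* Per-slot convergence-error term X_n^t = lambda * 1_n^t * B_n * (gamma_n^k - 1),
   gamma = the (random) freezing percentage of the current frame k. *)
Definition Xterm (lam B : R) (ind : nat -> Omega -> R) (gamma : Omega -> R)
  (t : nat) (w : Omega) : R :=
  lam * ind t w * B * (gamma w - 1).

Definition beta1 (Emax Ebar : R) : R := 2^-1 * (Emax ^+ 2 + Ebar ^+ 2).

Definition beta2 (T : nat) (Emax Ebar : R) : R :=
  beta1 Emax Ebar +
  ((T%:R - 1) * ((Emax - Ebar) * Emax + Ebar ^+ 2)) / 2.

(* "E{ f | Y } <= E{ g | Y }" (a.s.), written through the defining property
   of conditional expectation given sigma(Y): for every Borel set Bs,
   E[f 1_{Y in Bs}] <= E[g 1_{Y in Bs}]. *)
Definition cond_exp_le (mu : {measure set Omega -> \bar R})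
  (Y f g : Omega -> R) : Prop :=
  forall Bs : set R, measurable Bs ->
    (\int[mu]_(w in Y @^-1` Bs) (f w)%:E <= \int[mu]_(w in Y @^-1` Bs) (g w)%:E)%E.

End FLDefs.

(* Main.v *)
Require Import Defs.
From HB Require Import structures.
From mathcomp Require Import all_boot all_order all_algebra.
From mathcomp Require Import all_classical all_reals all_analysis.
From mathcomp Require Import lra.
Import Order.TTheory GRing.Theory Num.Theory.
Local Open Scope classical_set_scope.
Local Open Scope ring_scope.

Local Open Scope classical_set_scope.
Lemma arith_step (R : realType) (J q q' q0 e S B C Ebar : R) :
  q' ^+ 2 <= (q + e - Ebar) ^+ 2 ->
  q ^+ 2 - q0 ^+ 2 - 2 * S <= J * B + J * (J - 1) * C ->
  (e - Ebar) ^+ 2 <= B ->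
  (q - q0) * (e - Ebar) <= J * C ->
  q' ^+ 2 - q0 ^+ 2 - 2 * (S + q0 * (e - Ebar)) <= (J + 1) * B + (J + 1) * (J + 1 - 1) * C.
Proof. move=> h1 h2 h3 h4; nra. Qed.

Lemma arith_fin (R : realType) (a b SE SX V Tn B C : R) :
  a ^+ 2 - b ^+ 2 - 2 * SE <= Tn * B + Tn * (Tn - 1) * C ->
  2^-1 * a ^+ 2 - 2^-1 * b ^+ 2 + V * SX <= (2^-1 * B + (Tn - 1) * C / 2) * Tn + (V * SX + SE).
Proof. move=> h; nra. Qed.

Lemma arith_sq (R : realType) (e Ebar Emax : R) :
  0 <= e -> e <= Emax -> 0 < Ebar -> (e - Ebar) ^+ 2 <= Emax ^+ 2 + Ebar ^+ 2.
Proof. move=> *; nra. Qed.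

Lemma arith_prod (R : realType) (J d e Ebar Emax : R) :
  0 <= J -> - (J * Ebar) <= d -> d <= J * Emax -> 0 <= e -> e <= Emax -> 0 < Ebar -> Ebar <= Emax ->
  d * (e - Ebar) <= J * ((Emax - Ebar) * Emax + Ebar ^+ 2).
Proof.
move=> J0 h1 h2 h3 h4 h5 h6.
have k1 : 0 <= J * ((Emax - Ebar) * Emax) by apply: mulr_ge0 => //; apply: mulr_ge0; lra.
have k2 : 0 <= J * Ebar ^+ 2 by apply: mulr_ge0 => //; apply: sqr_ge0.
have [he|he] := lerP Ebar e.
- have : d * (e - Ebar) <= J * Emax * (e - Ebar) by apply: ler_wpM2r; lra.
  have : J * Emax * (e - Ebar) <= J * Emax * (Emax - Ebar).
    by apply: ler_wpM2l; [apply: mulr_ge0; lra | lra].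
  nra.
- have : d * (e - Ebar) <= - (J * Ebar) * (e - Ebar) by apply: ler_wnM2r; lra.
  have : - (J * Ebar) * (e - Ebar) <= J * Ebar * Ebar.
    by rewrite mulNr -mulrN; apply: ler_wpM2l; [apply: mulr_ge0; lra | lra].
  nra.
Qed.

Local Open Scope ereal_scope.
Lemma int_mono d (T : measurableType d) (R : realType) (mu : {measure set T -> \bar R})
  (D : set T) (f g : T -> \bar R) : (forall x, f x <= g x) ->
  \int[mu]_(x in D) f x <= \int[mu]_(x in D) g x.
Proof.
move=> fg; rewrite /integral; apply: leeB.
- apply: ge_ereal_sup => _ [h /= hf <-]; apply: ereal_sup_ubound; exists h => //= x.
  apply: le_trans (hf x) _; apply: (@funepos_le _ _ setT) => //; last exact: in_setT.
  by move=> y _; apply: lee_restrict.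
- apply: ge_ereal_sup => _ [h /= hf <-]; apply: ereal_sup_ubound; exists h => //= x.
  apply: le_trans (hf x) _; apply: (@funeneg_le _ _ setT) => //; last exact: in_setT.
  by move=> y _; apply: lee_restrict.
Qed.

Local Close Scope ereal_scope.
Lemma big_shift (R : realType) (F : nat -> R) m n :
  \sum_(m <= t < m + n) F t = \sum_(i < n) F (m + i)%N.
Proof.
elim: n => [|n IH]; first by rewrite addn0 big_geq // big_ord0.
by rewrite addnS big_nat_recr ?leq_addr //= IH big_ord_recr.
Qed.

Lemma arith_b1 (R : realType) (q q0 e a b Ebar Emax : R) :
  0 < Ebar -> - a <= q - q0 -> q - q0 <= b -> 0 <= e -> e <= Emax ->
  - (a + Ebar) <= q + e - Ebar - q0 <= b + Emax.
Proof. by move=> *; apply/andP; split; lra. Qed.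

Lemma arith_b2 (R : realType) (q q0 e a b Ebar Emax : R) :
  0 < Ebar -> - a <= q - q0 -> 0 <= b -> 0 <= e -> e <= Emax -> 0 <= q0 -> 0 <= Emax ->
  q + e - Ebar < 0 -> - (a + Ebar) <= 0 - q0 <= b + Emax.
Proof. by move=> *; apply/andP; split; lra. Qed.

Section Pw.
Context {d : measure_display} {Omega : measurableType d} {R : realType}.
Variables (Ebar Emax : R) (En : nat -> Omega -> R) (w : Omega).
Hypothesis hEbar : 0 < Ebar.
Hypothesis hE0 : forall t, 0 <= En t w.
Hypothesis hEmax : forall t, En t w <= Emax.

Lemma Q_ge0 t : 0 <= Qq Ebar En t w.
Proof. by case: t => [|t] //=; rewrite le_max lexx orbT. Qed.

Lemma Q_zero t : Emax <= Ebar -> Qq Ebar En t w = 0.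
Proof.
move=> hle; elim: t => [|t IH] //=; rewrite IH add0r.
have := hEmax t => h.
by rewrite /Num.max; case: ifP => // /negbT; rewrite -leNgt => h'; apply/eqP; rewrite eq_le h' /=; lra.
Qed.

Lemma Q_step t : Qq Ebar En t.+1 w = Num.max (Qq Ebar En t w + En t w - Ebar) 0.
Proof. by []. Qed.

Lemma Q_sq t : Qq Ebar En t.+1 w ^+ 2 <= (Qq Ebar En t w + En t w - Ebar) ^+ 2.
Proof.
rewrite Q_step /Num.max; case: ifP => [h|_]; last exact: lexx.
by rewrite expr0n /= sqr_ge0.
Qed.

Lemma Q_case t :
  (Qq Ebar En t.+1 w = Qq Ebar En t w + En t w - Ebar /\ 0 <= Qq Ebar En t w + En t w - Ebar)
  \/ (Qq Ebar En t.+1 w = 0 /\ Qq Ebar En t w + En t w - Ebar < 0).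
Proof.
have [h|h] := lerP 0 (Qq Ebar En t w + En t w - Ebar).
  by left; split => //; apply: max_l.
by right; split => //; apply: max_r; apply: ltW.
Qed.

Lemma Q_bounds m j :
  - (j%:R * Ebar) <= Qq Ebar En (m + j) w - Qq Ebar En m w <= j%:R * Emax.
Proof.
have Emax0 : 0 <= Emax by apply: le_trans (hE0 0) (hEmax 0).
elim: j => [|j IH]; first by rewrite addn0 subrr -[0%:R]/(0 : R) !mul0r oppr0 lexx.
rewrite addnS.
have h1 := hE0 (m + j)%N; have h2 := hEmax (m + j)%N; have h3 := Q_ge0 (m + j)%N.
have q00 := Q_ge0 m.
have -> : j.+1%:R * Ebar = j%:R * Ebar + Ebar by rewrite -natr1 mulrDl mul1r.
have -> : j.+1%:R * Emax = j%:R * Emax + Emax by rewrite -natr1 mulrDl mul1r.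
have b0 : 0 <= j%:R * Emax by rewrite mulr_ge0.
have [[-> hx]|[-> hx]] := Q_case (m + j)%N.
all: move: IH b0 h1 h2 h3 q00 hx.
all: move: (Qq Ebar En (m + j) w) (Qq Ebar En m w) (En (m + j)%N w) (j%:R * Ebar) (j%:R * Emax).
all: move=> q q0 e a b /andP [IH1 IH2] b0 h1 h2 h3 q00 hx.
  by apply: arith_b1.
by apply: (@arith_b2 _ q q0 e a b Ebar Emax).
Qed.


Lemma arith_base (x B C : R) : x ^+ 2 - x ^+ 2 - 2 * 0 <= 0 * B + 0 * (0 - 1) * C.
Proof. by rewrite subrr mulr0 subr0 !mul0r addr0. Qed.

Lemma key m j :
  Qq Ebar En (m + j) w ^+ 2 - Qq Ebar En m w ^+ 2
  - 2 * \sum_(i < j) Qq Ebar En m w * (En (m + i)%N w - Ebar)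
  <= j%:R * (Emax ^+ 2 + Ebar ^+ 2) + j%:R * (j%:R - 1) * ((Emax - Ebar) * Emax + Ebar ^+ 2).
Proof.
have Emax0 : 0 <= Emax by apply: le_trans (hE0 0) (hEmax 0).
elim: j => [|j IH]; first by rewrite addn0 big_ord0; exact: arith_base.
have -> : (j.+1%:R : R) = j%:R + 1 by rewrite -natr1.
rewrite addnS big_ord_recr.
apply: arith_step; first exact: Q_sq.
- exact: IH.
- by apply: arith_sq.
have [hle|hlt] := lerP Emax Ebar.
  rewrite !Q_zero // subrr mul0r; apply: mulr_ge0 => //; nra.
have /andP [b1 b2] := Q_bounds m j.
by apply: arith_prod => //; lra.
Qed.

End Pw.

Theorem lemma3 (d : measure_display) (Omega : measurableType d) (R : realType)
  (P : probability Omega R)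
  (T : nat) (hT : (0 < T)%N)
  (lam B V Ebar Emax Pbar : R) (hlam : 0 < lam) (hEbar : 0 < Ebar) (hV : 0 <= V)
  (En : nat -> Omega -> R)
  (hEm : forall t, measurable_fun setT (En t))
  (hE0 : forall t w, 0 <= En t w) (hEmax : forall t w, En t w <= Emax)
  (ind : nat -> Omega -> R)
  (hind_m : forall t, measurable_fun setT (ind t))
  (hind : forall t w, ind t w = 0 \/ ind t w = 1)
  (k : nat) (gamma : Omega -> R) (p : nat -> Omega -> R)
  (hgam_m : measurable_fun setT gamma)
  (hgam : forall w, 0 <= gamma w <= 1)
  (hp : forall t w, (k * T <= t < k.+1 * T)%N -> 0 <= p t w <= Pbar) :
  cond_exp_le P (Qq Ebar En (k * T))
    (fun w => 2^-1 * (Qq Ebar En (k * T + T) w) ^+ 2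
              - 2^-1 * (Qq Ebar En (k * T) w) ^+ 2
              + V * \sum_(k * T <= t < k.+1 * T) Xterm lam B ind gamma t w)
    (fun w => beta2 T Emax Ebar * T%:R
              + \sum_(k * T <= t < k.+1 * T)
                  (V * Xterm lam B ind gamma t w
                   + Qq Ebar En (k * T) w * (En t w - Ebar))).
Proof.
move=> Bs mBs; apply: int_mono => w; rewrite lee_fin.
have hk := @key _ _ _ Ebar Emax En w hEbar (hE0^~ w) (hEmax^~ w) (k * T) T.
have -> : (k.+1 * T = k * T + T)%N by rewrite mulSn addnC.
rewrite !big_shift big_split /= -mulr_sumr /beta2 /beta1.
move: hk.
move: (Qq Ebar En (k * T + T) w) (Qq Ebar En (k * T) w).
move=> a b; exact: arith_fin.
Qed.
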